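(* Let $S$ be a monoid, $A$ a right $S$-act with a maximal subact $B$, and $a\in A\setminus B$. The following are equivalent: (1) $\mathfrak{M}=\{s\in S\mid as\in B\}$; (2) for $s\in S$, $as=a$ implies $s\notin\mathfrak{M}$.
   Context: $S$ is a monoid with identity $1$ having at least one right non-invertible element. A (right) $S$-act is a nonempty set with an action $(a,s)\mapsto as$, $a1=a$, $a(st)=(as)t$. A subact is a nonempty subset closed under the action; a maximal subact is a proper subact not properly contained in another proper subact. $\mathfrak{M}=\{s\in S\mid st\neq1\ \forall t\in S\}$ is the unique maximal right ideal of $S$. *)

(* Defs.v *)
Definition is_monoid {S : Type} (mul : S -> S -> S) (one : S) : Prop :=
  (forall x y z, mul x (mul y z) = mul (mul x y) z) /\
  (forall x, mul one x = x) /\ (forall x, mul x one = x).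

Definition has_right_noninvertible {S : Type} (mul : S -> S -> S) (one : S) : Prop :=
  exists s, forall t, mul s t <> one.

Definition is_right_act {S A : Type} (mul : S -> S -> S) (one : S)
  (act : A -> S -> A) : Prop :=
  inhabited A /\
  (forall a, act a one = a) /\
  (forall a s t, act a (mul s t) = act (act a s) t).

Definition is_subact {S A : Type} (act : A -> S -> A) (B : A -> Prop) : Prop :=
  (exists b, B b) /\ (forall b s, B b -> B (act b s)).

Definition is_proper {A : Type} (B : A -> Prop) : Prop := exists a, ~ B a.

Definition is_maximal_subact {S A : Type} (act : A -> S -> A) (B : A -> Prop) : Prop :=
  is_subact act B /\ is_proper B /\
  (forall C : A -> Prop, is_subact act C -> is_proper C ->
     (forall x, B x -> C x) -> forall x, C x -> B x).

Definition frakM {S : Type} (mul : S -> S -> S) (one : S) (s : S) : Prop :=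
  forall t, mul s t <> one.

(* Main.v *)
Require Import Defs.

Theorem lemma2p7 (S : Type) (mul : S -> S -> S) (one : S)
  (HS : is_monoid mul one) (Hni : has_right_noninvertible mul one)
  (A : Type) (act : A -> S -> A) (HA : is_right_act mul one act)
  (B : A -> Prop) (HB : is_maximal_subact act B)
  (a : A) (Ha : ~ B a) :
  (forall s, frakM mul one s <-> B (act a s)) <->
  (forall s, act a s = a -> ~ frakM mul one s).
Proof.
  destruct HS as [Hass [H1l H1r]].
  destruct HA as [_ [Hact1 Hactm]].
  destruct HB as [[_ Bcl] [_ Hmax]].
  split.
  - intros H s Hs HM. apply Ha. rewrite <- Hs. apply H. exact HM.
  - intros H s. split.
    + intros HM. 
      set (C := fun x => B x \/ exists t, x = act (act a s) t).
      assert (HC : is_subact act C).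
      { split.
        - exists (act a s). right. exists one. now rewrite Hact1.
        - intros b u [Hb | [t Ht]].
          + left. now apply Bcl.
          + right. exists (mul t u). subst b. now rewrite Hactm. }
      apply (Hmax C HC); [ | intros x Hx; now left | right; exists one; now rewrite Hact1 ].
      exists a. intros [Hb | [t Ht]]; [exact (Ha Hb) |].
      rewrite <- Hactm in Ht. apply (H (mul s t) (eq_sym Ht)).
      intros u Hu. apply (HM (mul t u)). now rewrite Hass.
    + intros Hb t Ht. apply Ha.
      rewrite <- (Hact1 a), <- Ht, Hactm. now apply Bcl.
Qed.
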